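(* Let $\mathcal L\in C^1([0,\infty))$ satisfy $\mathcal L'(t)+2b\mathcal L(t)\le c+a\mathcal L^2(t)$ for every $t\ge0$, where $a,b,c>0$ and $\varrho:=\frac{b}{\sqrt{ac}}>1$. There exists a time $t_\varrho>0$ depending only on $\varrho$ such that: if $\mathcal L(0)\le\sqrt{c/a}\,(2\varrho-1)$, then $$\sup_{t\ge t_\varrho/\sqrt{ac}}\mathcal L(t)\le\sqrt{\frac ca}\,\frac{1}{2\varrho-1}.$$ *)

(* Defs.v *)
From Stdlib Require Export Reals.
Open Scope R_scope.

Definition has_deriv_nonneg (L Lp : R -> R) (t : R) : Prop :=
  forall eps : R, 0 < eps -> exists delta : R, 0 < delta /\
    forall s : R, 0 <= s -> Rabs (s - t) < delta ->
      Rabs (L s - L t - Lp t * (s - t)) <= eps * Rabs (s - t).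

Definition cont_nonneg (f : R -> R) (t : R) : Prop :=
  forall eps : R, 0 < eps -> exists delta : R, 0 < delta /\
    forall s : R, 0 <= s -> Rabs (s - t) < delta -> Rabs (f s - f t) < eps.

Definition C1_nonneg (L Lp : R -> R) : Prop :=
  forall t : R, 0 <= t -> has_deriv_nonneg L Lp t /\ cont_nonneg Lp t.

(* Main.v *)
Require Import Defs.
From Stdlib Require Import Reals Lra.
Open Scope R_scope.

Lemma absle (x e : R) : Rabs x <= e -> - e <= x <= e.
Proof. unfold Rabs; destruct (Rcase_abs x); lra. Qed.

Lemma abslt (x e : R) : - e < x < e -> Rabs x < e.
Proof. unfold Rabs; destruct (Rcase_abs x); lra. Qed.

Lemma absge (x : R) : 0 <= x -> Rabs x = x.
Proof. intro; unfold Rabs; destruct (Rcase_abs x); lra. Qed.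

Lemma absle2 (x : R) : x <= 0 -> Rabs x = - x.
Proof. intro; unfold Rabs; destruct (Rcase_abs x); lra. Qed.

Lemma deriv_bounds (h hp : R -> R) (t eps : R) :
  has_deriv_nonneg h hp t -> 0 < eps ->
  exists delta, 0 < delta /\ forall s, 0 <= s -> t - delta < s < t + delta ->
    - eps * Rabs (s - t) <= h s - h t - hp t * (s - t) <= eps * Rabs (s - t).
Proof.
  intros H He. destruct (H eps He) as [d [Hd Hs]]. exists d; split; auto.
  intros s Hs0 Hst. replace (-eps * Rabs (s - t)) with (- (eps * Rabs (s-t))) by ring.
  apply absle. apply Hs; auto. apply abslt; lra.
Qed.

Lemma barrier (h hp : R -> R) (al be t0 t1 : R) :
  0 <= t0 -> 
  (forall t, t0 <= t <= t1 -> has_deriv_nonneg h hp t) ->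
  h t0 <= al - be * t0 ->
  (forall t, t0 <= t <= t1 -> h t = al - be * t -> hp t < - be) ->
  forall t, t0 <= t <= t1 -> h t <= al - be * t.
Proof.
  intros Ht0 Hd Hi Hb t2 Ht2.
  destruct (Rle_or_lt (h t2) (al - be * t2)) as [|Hc]; auto. exfalso.
  set (E := fun s => t0 <= s <= t2 /\ h s <= al - be * s).
  assert (HB : bound E). { exists t2. intros x [Hx _]. lra. }
  assert (HE : exists x, E x). { exists t0. split; [lra|auto]. }
  destruct (completeness E HB HE) as [m [Hub Hlub]].
  assert (Hm0 : t0 <= m). { apply Hub. split; [lra|auto]. }
  assert (Hm2 : m <= t2). { apply Hlub. intros x [Hx _]. lra. }
  assert (Hgm : h m <= al - be * m).
  { destruct (Rle_or_lt (h m) (al - be * m)) as [|Hgt]; auto. exfalso.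
    set (K := Rabs (hp m) + Rabs be + 1).
    assert (HK : 0 < K). { unfold K; pose proof (Rabs_pos (hp m)); pose proof (Rabs_pos be); lra. }
    destruct (deriv_bounds h hp m 1 (Hd m ltac:(lra)) ltac:(lra)) as [d [Hdp Hs]].
    set (g := h m - (al - be * m)).
    set (eta := Rmin d (g / K)).
    assert (Heta : 0 < eta). { unfold eta. apply Rmin_pos; auto. unfold g; apply Rdiv_lt_0_compat; lra. }
    assert (Hek : eta * K <= g). { unfold eta. pose proof (Rmin_r d (g/K)).
      apply Rle_trans with ((g / K) * K). apply Rmult_le_compat_r; lra. right; field; lra. }
    assert (m <= m - eta). 2: lra.
    apply Hlub. intros x [[Hx1 Hx2] Hx3].
    destruct (Rle_or_lt x (m - eta)) as [|Hxl]; auto. exfalso.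
    assert (Hxm : x <= m) by (apply Hub; split; [lra|auto]).
    assert (Hed : eta <= d) by apply Rmin_l.
    destruct (Hs x ltac:(lra) ltac:(lra)) as [Hs1 _].
    rewrite (absle2 (x - m)) in Hs1 by lra.
    pose proof (Rabs_pos (hp m)). pose proof (Rabs_pos be).
    pose proof (Rle_abs (hp m)). pose proof (Rle_abs (- hp m)). rewrite Rabs_Ropp in *.
    pose proof (Rle_abs be). pose proof (Rle_abs (- be)). rewrite Rabs_Ropp in *.
    assert (Hmx : 0 <= m - x) by lra.
    assert (hp m * (x - m) >= - Rabs (hp m) * (m - x)) by nra.
    assert (be * (m - x) <= Rabs be * (m - x)) by nra.
    assert (K * (m - x) <= K * eta) by nra.
    unfold K, g in *. nra. }
  assert (Hm2' : m < t2). { destruct (Req_dec m t2); [subst; lra | lra]. }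
  destruct (Req_dec (h m) (al - be * m)) as [Heq | Hne].
  - pose proof (Hb m ltac:(lra) Heq) as Hq.
    set (q := hp m + be).
    destruct (deriv_bounds h hp m (- q / 2) (Hd m ltac:(lra)) ltac:(unfold q; lra)) as [d [Hdp Hs]].
    set (s := m + Rmin d (t2 - m) / 2).
    assert (Hmin : 0 < Rmin d (t2 - m)) by (apply Rmin_pos; lra).
    pose proof (Rmin_l d (t2 - m)). pose proof (Rmin_r d (t2 - m)).
    assert (s <= m). 2: unfold s in *; lra.
    apply Hub. split. unfold s; lra.
    destruct (Hs s ltac:(unfold s; lra) ltac:(unfold s; lra)) as [_ Hs2].
    rewrite (absge (s - m)) in Hs2 by (unfold s; lra).
    assert (Hsm : 0 < s - m) by (unfold s; lra).
    unfold q in *.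
    assert ((hp m + be) * (s - m) < 0) by (apply Rmult_neg_pos; lra).
    lra.
  - assert (Hlt : h m < al - be * m) by lra.
    set (K := Rabs (hp m) + Rabs be + 1).
    assert (HK : 0 < K). { unfold K; pose proof (Rabs_pos (hp m)); pose proof (Rabs_pos be); lra. }
    destruct (deriv_bounds h hp m 1 (Hd m ltac:(lra)) ltac:(lra)) as [d [Hdp Hs]].
    set (g := (al - be * m) - h m).
    set (eta := Rmin (Rmin d (t2 - m)) (g / K)).
    assert (Hgp : 0 < g / K) by (unfold g; apply Rdiv_lt_0_compat; lra).
    assert (Heta : 0 < eta). { unfold eta. apply Rmin_pos; auto. apply Rmin_pos; lra. }
    assert (Hek : eta * K <= g). { unfold eta. pose proof (Rmin_r (Rmin d (t2 - m)) (g/K)).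
      apply Rle_trans with ((g / K) * K). apply Rmult_le_compat_r; lra. right; field; lra. }
    assert (H1 : eta <= Rmin d (t2 - m)) by apply Rmin_l.
    pose proof (Rmin_l d (t2 - m)). pose proof (Rmin_r d (t2 - m)).
    set (s := m + eta / 2).
    assert (s <= m). 2: unfold s in *; lra.
    apply Hub. split. unfold s; lra.
    destruct (Hs s ltac:(unfold s; lra) ltac:(unfold s; lra)) as [_ Hs2].
    rewrite (absge (s - m)) in Hs2 by (unfold s; lra).
    assert (Hsm : 0 < s - m) by (unfold s; lra).
    pose proof (Rle_abs (hp m)). pose proof (Rle_abs be).
    assert (hp m * (s - m) <= Rabs (hp m) * (s - m)) by nra.
    assert (be * (s - m) <= Rabs be * (s - m)) by nra.
    assert (K * (s - m) <= K * eta) by (unfold s; nra).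
    unfold K, g in *. clearbody s eta. lra.
Qed.

Lemma fbound (rho x : R) : 1 < rho ->
  / (2 * rho - 1) <= x <= 2 * rho - 1 ->
  1 + x ^ 2 - 2 * rho * x <= - (2 * (rho - 1) * (/ (2 * rho - 1)) ^ 2).
Proof.
  intros Hr Hx. set (M := 2 * rho - 1) in *. set (m := / M) in *.
  assert (HM : 1 < M) by (unfold M; lra).
  assert (Hmm : m * M = 1) by (unfold m; field; lra).
  assert (Hm1 : m < 1). { unfold m. rewrite <- Rinv_1. apply Rinv_lt_contravar; lra. }
  assert (Hm0 : 0 < m) by (unfold m; apply Rinv_0_lt_compat; lra).
  assert (Hfm : 1 + m ^ 2 - 2 * rho * m = - (2 * (rho - 1) * m ^ 2)).
  { replace rho with ((M + 1) / 2) by (unfold M; field). 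
    replace 1 with (m * M) at 1 by auto. simpl.
    assert (m * M * m = m) by (rewrite Hmm; ring).
    field_simplify. nra. }
  rewrite <- Hfm.
  assert ((x - m) * (x + m - 2 * rho) <= 0).
  { assert (0 <= x - m) by lra. assert (x + m - 2 * rho <= 0) by (unfold M in *; lra). nra. }
  nra.
Qed.

Theorem lemma5p2 :
  forall rho : R, 1 < rho ->
  exists t_rho : R, 0 < t_rho /\
    forall (a b c : R) (L Lp : R -> R),
      0 < a -> 0 < b -> 0 < c ->
      b / sqrt (a * c) = rho ->
      C1_nonneg L Lp ->
      (forall t : R, 0 <= t -> Lp t + 2 * b * L t <= c + a * (L t) ^ 2) ->
      L 0 <= sqrt (c / a) * (2 * rho - 1) ->
      forall t : R, t_rho / sqrt (a * c) <= t ->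
        L t <= sqrt (c / a) * / (2 * rho - 1).
Proof.
  intros rho Hr.
  set (M := 2 * rho - 1). set (m := / M).
  set (d := 2 * (rho - 1) * m ^ 2).
  assert (HM : 1 < M) by (unfold M; lra).
  assert (Hmm : m * M = 1) by (unfold m; field; lra).
  assert (Hm1 : m < 1). { unfold m. rewrite <- Rinv_1. apply Rinv_lt_contravar; lra. }
  assert (Hm0 : 0 < m) by (unfold m; apply Rinv_0_lt_compat; lra).
  assert (Hd : 0 < d) by (unfold d; assert (0 < m ^ 2) by nra; nra).
  exists (2 * (M - m) / d). split.
  { apply Rdiv_lt_0_compat; lra. }
  intros a b c L Lp Ha Hb Hc Hrho HC1 Hineq HL0 t Ht.
  set (s := sqrt (a * c)) in *. set (k := sqrt (c / a)) in *.
  assert (Hs : 0 < s) by (apply sqrt_lt_R0; nra).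
  assert (Hk : 0 < k) by (apply sqrt_lt_R0; apply Rdiv_lt_0_compat; lra).
  assert (Hss : s * s = a * c) by (apply sqrt_sqrt; nra).
  assert (Hkk : k * k = c / a) by (apply sqrt_sqrt; apply Rlt_le, Rdiv_lt_0_compat; lra).
  assert (Hks : k * s = c).
  { unfold k, s. rewrite <- sqrt_mult_alt by (apply Rlt_le, Rdiv_lt_0_compat; lra).
    replace (c / a * (a * c)) with (c * c) by (field; lra). apply sqrt_square; lra. }
  assert (Hka : k * a = s).
  { apply Rmult_eq_reg_r with s; [|lra]. rewrite Rmult_assoc, (Rmult_comm a s), <- Rmult_assoc, Hks. nra. }
  assert (Hbs : b = rho * s) by (rewrite <- Hrho; field; lra).
  assert (Key : forall u, 0 <= u -> k * m <= L u <= k * M -> Lp u <= - (c * d)).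
  { intros u Hu HLu. set (x := L u / k).
    assert (HLx : L u = k * x) by (unfold x; field; lra).
    assert (Hx : m <= x <= M).
    { split; apply Rmult_le_reg_l with k; auto; lra. }
    pose proof (fbound rho x Hr Hx) as Hf. fold M m in Hf. fold d in Hf.
    pose proof (Hineq u Hu) as Hi. rewrite HLx, Hbs in Hi.
    assert (Heq : c + a * (k * x) ^ 2 - 2 * (rho * s) * (k * x) = c * (1 + x ^ 2 - 2 * rho * x)).
    { replace (a * (k * x) ^ 2) with ((k * a) * k * x ^ 2) by ring. rewrite Hka, (Rmult_comm s k), Hks.
      replace (2 * (rho * s) * (k * x)) with (2 * rho * (k * s) * x) by ring. rewrite Hks. ring. }
    assert (c * (1 + x ^ 2 - 2 * rho * x) <= c * (- d)) by (apply Rmult_le_compat_l; lra).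
    lra. }
  assert (Hderiv : forall u, 0 <= u -> has_deriv_nonneg L Lp u) by (intros u Hu; apply (HC1 u Hu)).
  set (be := c * d / 2).
  set (T := 2 * (M - m) / d / s) in *.
  assert (HbeT : be * T = k * M - k * m).
  { unfold be, T. replace k with (c / s) by (apply Rmult_eq_reg_r with s; [|lra]; field_simplify; lra).
    field. lra. }
  assert (HT0 : 0 <= T).
  { unfold T. apply Rlt_le, Rdiv_lt_0_compat; auto. apply Rdiv_lt_0_compat; lra. }
  assert (Hbe : 0 < be) by (unfold be; nra).
  assert (Ph1 : L T <= k * M - be * T).
  { apply (barrier L Lp (k * M) be 0 T); try lra.
    - intros u Hu; apply Hderiv; lra.
    - intros u Hu Heq. assert (be * u <= be * T) by (apply Rmult_le_compat_l; lra).
      assert (0 <= be * u) by nra.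
      assert (Lp u <= - (c * d)) by (apply Key; lra). unfold be in *; nra. }
  assert (Ph2 : L t <= k * m - 0 * t).
  { apply (barrier L Lp (k * m) 0 T t); try lra.
    - intros u Hu; apply Hderiv; lra.
    - intros u Hu Heq. assert (Lp u <= - (c * d)) by (apply Key; [lra|]; split; [lra|]; assert (k * m <= k * M) by (apply Rmult_le_compat_l; lra); lra).
      assert (0 < c * d) by (apply Rmult_lt_0_compat; lra). lra. }
  lra.
Qed.
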